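(* Let $A\in\mathbb{R}^{n\times d}$ have i.i.d. rows with mean zero and covariance $\Sigma$, let $b\in\mathbb{R}^n$, and let $A$ be split row-wise into $m$ blocks $A^{(1)},\dots,A^{(m)}\in\mathbb{R}^{(n/m)\times d}$. Let $f(x)=\frac1{2n}\|Ax-b\|_2^2+\frac\lambda2\|x\|_2^2$ ($\lambda>0$), $g(x)=\nabla f(x)$, $H=\frac1nA^TA+\lambda I$, $d_\lambda=\mathrm{tr}(\Sigma(\Sigma+\lambda I)^{-1})$ with $md_\lambda<n$, and \[\tilde H=\left(\frac1m\sum_{i=1}^m\left(\frac{1}{1-\frac{md_\lambda}{n}}\frac mn A^{(i)T}A^{(i)}+\lambda I\right)^{-1}\right)^{-1}.\] Let $\omega^\star=\arg\min f$, $\omega_{t+1}=\omega_t-\tilde H^{-1}g(\omega_t)$ and $\Delta_t=\omega_t-\omega^\star$. Then $\|\Delta_{t+1}\|\le\beta\|\Delta_t\|$, where \[\beta=\frac{\sqrt2\alpha}{\sqrt{1-\alpha^2}}\sqrt{\frac{\sigma_{\max}+\lambda+\alpha_0}{\sigma_{\min}+\lambda-\alpha_0}},\] $\alpha_0=\|\Sigma-\frac1nA^TA\|$, $\alpha_1=\|\tilde H^{-1}-\mathbb{E}[\tilde H^{-1}]\|$, $\Omega_0=\mathbb{E}[\tilde H^{-1}]-(\Sigma+\lambda I)^{-1}$, $\alpha=(\sigma_{\max}+\lambda+\alpha_0)\left(\frac1{\lambda^2}\alpha_0+\alpha_1+\|\Omega_0\|\right)$, and $\sigma_{\min},\sigma_{\max}$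 are the smallest and largest eigenvalues of $\Sigma$.
   Context: $\|\cdot\|$ denotes the Euclidean norm on vectors and the spectral norm on matrices. $n/m$ is assumed to be an integer. *)

(* Defs.v *)
From HB Require Import structures.
From mathcomp Require Import all_boot all_order all_algebra.
From mathcomp Require Import all_classical all_reals all_analysis.
From mathcomp Require Import zify.
Set Implicit Arguments.
Unset Strict Implicit.
Unset Printing Implicit Defensive.
Import Order.TTheory GRing.Theory Num.Theory.
Local Open Scope classical_set_scope.
Local Open Scope ring_scope.

Section Defs.
Variable R : realType.

Definition vnorm (q : nat) (x : 'cV[R]_q) : R := Num.sqrt (\sum_(j < q) x j 0 ^+ 2).

Definition specnorm (p q : nat) (M : 'M[R]_(p, q)) : R :=
  sup [set vnorm (M *m x) | x in [set x : 'cV[R]_q | vnorm x = 1]].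

Lemma blk_idx_proof (m p : nat) (i : 'I_m) (r : 'I_p) : (i * p + r < m * p)%N.
Proof.
have Hi := ltn_ord i; have Hr := ltn_ord r.
have : (i.+1 * p <= m * p)%N by rewrite leq_mul2r Hi orbT.
rewrite mulSn; lia.
Qed.

Definition blk_idx (m p : nat) (i : 'I_m) (r : 'I_p) : 'I_(m * p) :=
  Ordinal (blk_idx_proof i r).

Definition block (m p d : nat) (A : 'M[R]_(m * p, d)) (i : 'I_m) : 'M[R]_(p, d) :=
  \matrix_(r < p, c < d) A (blk_idx i r) c.

Definition fobj (n d : nat) (A : 'M[R]_(n, d)) (b : 'cV[R]_n) (lam : R) (x : 'cV[R]_d) : R :=
  (2 * n%:R)^-1 * vnorm (A *m x - b) ^+ 2 + lam / 2 * vnorm x ^+ 2.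

Definition grad (n d : nat) (A : 'M[R]_(n, d)) (b : 'cV[R]_n) (lam : R) (x : 'cV[R]_d) : 'cV[R]_d :=
  n%:R^-1 *: (A^T *m (A *m x - b)) + lam *: x.

Definition dlam (d : nat) (Sigma : 'M[R]_d) (lam : R) : R :=
  \tr (Sigma *m invmx (Sigma + lam%:M)).

Definition Htilde (m p d : nat) (A : 'M[R]_(m * p, d)) (dl lam : R) : 'M[R]_d :=
  let n := (m * p)%N in
  invmx (m%:R^-1 *: \sum_(i < m)
    invmx (((1 - m%:R * dl / n%:R)^-1 * (m%:R / n%:R)) *: ((block A i)^T *m block A i)
           + lam%:M)).

End Defs.

Section Prob.
Variables (R : realType) (dT : measure_display) (T : measurableType dT).
Variable (P : probability T R).
Local Open Scope ereal_scope.

Definition Emx (p q : nat) (X : T -> 'M[R]_(p, q)) : 'M[R]_(p, q) :=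
  (\matrix_(i < p, j < q) fine (\int[P]_w (X w i j)%:E))%R.

(* The rows of the random matrix A are i.i.d. random vectors: entries are
   measurable, the rows are mutually independent and identically distributed
   (checked on measurable rectangles, which generate the product sigma-algebra
   and form a pi-system). *)
Definition iid_rows (n d : nat) (A : T -> 'M[R]_(n, d)) : Prop :=
  [/\ (forall i j, measurable_fun setT (fun w => A w i j)),
      (forall (S : {set 'I_n}) (B : 'I_n -> 'I_d -> set R),
          (forall i j, measurable (B i j)) ->
          fine (P [set w | forall i, i \in S -> forall j, B i j (A w i j)]) =
          (\prod_(i in S) fine (P [set w | forall j, B i j (A w i j)]))%R) &
      (forall (i i' : 'I_n) (B : 'I_d -> set R),
          (forall j, measurable (B j)) ->
          P [set w | forall j, B j (A w i j)] = P [set w | forall j, B j (A w i' j)])].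

Definition mean0_cov (n d : nat) (A : T -> 'M[R]_(n, d)) (Sigma : 'M[R]_d) : Prop :=
  forall (i : 'I_n) (j k : 'I_d),
    [/\ P.-integrable setT (fun w => (A w i j)%:E),
        P.-integrable setT (fun w => (A w i j * A w i k)%:E)%R,
        \int[P]_w (A w i j)%:E = 0 &
        \int[P]_w (A w i j * A w i k)%R%:E = (Sigma j k)%:E].

End Prob.

(* Main.v *)
Require Import Defs.
From HB Require Import structures.
From mathcomp Require Import all_boot all_order all_algebra.
From mathcomp Require Import all_classical all_reals all_analysis.
From mathcomp Require Import ring lra.
Set Implicit Arguments.
Unset Strict Implicit.
Unset Printing Implicit Defensive.
Import Order.TTheory GRing.Theory Num.Theory.
Local Open Scope classical_set_scope.
Local Open Scope ring_scope.

Section Basic.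
Variable R : realType.

Definition dot (q : nat) (x y : 'cV[R]_q) : R := \sum_(j < q) x j 0 * y j 0.

Lemma dotC q (x y : 'cV[R]_q) : dot x y = dot y x.
Proof. by apply: eq_bigr => j _; rewrite mulrC. Qed.

Lemma dotDl q (x y z : 'cV[R]_q) : dot (x + y) z = dot x z + dot y z.
Proof. by rewrite /dot -big_split; apply: eq_bigr => j _; rewrite !mxE mulrDl. Qed.

Lemma dotZl q c (x y : 'cV[R]_q) : dot (c *: x) y = c * dot x y.
Proof. by rewrite /dot mulr_sumr; apply: eq_bigr => j _; rewrite !mxE mulrA. Qed.

Lemma dotNl q (x y : 'cV[R]_q) : dot (- x) y = - dot x y.
Proof. by rewrite -scaleN1r dotZl mulN1r. Qed.

Lemma dotDr q (x y z : 'cV[R]_q) : dot z (x + y) = dot z x + dot z y.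
Proof. by rewrite !(dotC z) dotDl. Qed.

Lemma dotZr q c (x y : 'cV[R]_q) : dot y (c *: x) = c * dot y x.
Proof. by rewrite !(dotC y) dotZl. Qed.

Lemma dotNr q (x y : 'cV[R]_q) : dot y (- x) = - dot y x.
Proof. by rewrite !(dotC y) dotNl. Qed.

Lemma dotxx_ge0 q (x : 'cV[R]_q) : 0 <= dot x x.
Proof. by apply: sumr_ge0 => j _; rewrite -expr2 sqr_ge0. Qed.

Lemma dot_mul q r (x : 'cV[R]_q) (M : 'M[R]_(q, r)) (y : 'cV[R]_r) :
  dot x (M *m y) = dot (M^T *m x) y.
Proof.
rewrite /dot.
under eq_bigr => j _ do rewrite mxE big_distrr /=.
under [RHS]eq_bigr => k _ do rewrite mxE big_distrl /=.
rewrite exchange_big /=; apply: eq_bigr => k _; apply: eq_bigr => j _.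
by rewrite mxE; ring.
Qed.

Lemma vnorm_sqr q (x : 'cV[R]_q) : vnorm x ^+ 2 = dot x x.
Proof.
rewrite /vnorm sqr_sqrtr; last by apply: sumr_ge0 => j _; exact: sqr_ge0.
by apply: eq_bigr => j _; rewrite expr2.
Qed.

Lemma vnorm_ge0 q (x : 'cV[R]_q) : 0 <= vnorm x.
Proof. exact: sqrtr_ge0. Qed.

Lemma vnorm_eq0 q (x : 'cV[R]_q) : vnorm x = 0 -> x = 0.
Proof.
move=> h; have : dot x x = 0 by rewrite -vnorm_sqr h expr2 mulr0.
move=> /psumr_eq0P h2; apply/matrixP => j k; rewrite (ord1 k) mxE.
have := h2 (fun i _ => sqr_ge0 _ : 0 <= x i 0 * x i 0) j isT => /eqP.
by rewrite -expr2 sqrf_eq0 => /eqP.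
Qed.

Lemma vnorm_dot q (x : 'cV[R]_q) : vnorm x = Num.sqrt (dot x x).
Proof. by rewrite -vnorm_sqr sqrtr_sqr ger0_norm // vnorm_ge0. Qed.

Lemma vnormZ q c (x : 'cV[R]_q) : vnorm (c *: x) = `|c| * vnorm x.
Proof.
rewrite !vnorm_dot dotZl dotZr mulrA -expr2 sqrtrM ?sqr_ge0 //.
by rewrite sqrtr_sqr.
Qed.

Lemma vnormN q (x : 'cV[R]_q) : vnorm (- x) = vnorm x.
Proof. by rewrite -scaleN1r vnormZ normrN normr1 mul1r. Qed.

Lemma vnorm0 q : vnorm (0 : 'cV[R]_q) = 0.
Proof. by rewrite -(scale0r (0 : 'cV[R]_q)) vnormZ normr0 mul0r. Qed.

Lemma sq_le (P B : R) : B ^+ 2 <= P ^+ 2 -> 0 <= P -> B <= P.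
Proof. move=> h1 h2. case: (lerP B P) => // h3. exfalso. nra. Qed.

Lemma aux1 (Y D E a : R) : 0 <= a -> Y ^+ 2 ^+ 2 <= D * E -> E <= Y * (a * Y) -> 0 < Y -> 0 <= D -> Y ^+ 2 <= a * D.
Proof. move=> a0 h1 h2 Y0 D0. have h3 : Y ^+ 2 ^+ 2 <= Y ^+ 2 * (a * D).
  apply: le_trans h1 _. have : D * E <= D * (Y * (a * Y)) by rewrite ler_wpM2l. move=> h. apply: le_trans h _. rewrite le_eqVlt; apply/orP; left; apply/eqP; ring.
have Y2 : 0 < Y ^+ 2 by rewrite exprn_gt0.
by rewrite [X in X <= _]expr2 ler_pM2l in h3.
Qed.

Lemma aux2 (k m X Y : R) : 0 < k -> X <= k * (m * X - Y) -> Y <= (m - k^-1) * X.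
Proof.
move=> kp h; rewrite -subr_ge0.
have -> : (m - k^-1) * X - Y = k^-1 * (k * (m * X - Y) - X).
  by field; rewrite gt_eqF.
apply: mulr_ge0; first by rewrite invr_ge0 ltW. by rewrite subr_ge0.
Qed.

Lemma aux3 (M K : R) : M <= M - K -> 0 < K -> False.
Proof. move=> h1 h2; lra. Qed.

Lemma discr (a b c : R) : 0 <= c -> (forall t, 0 <= a + 2 * b * t + c * t ^+ 2) ->
  b ^+ 2 <= a * c.
Proof.
move=> hc h.
have [c0|cpos] := eqVneq c 0.
  subst c. have [b0|bn0] := eqVneq b 0; first by subst b; rewrite expr2 !mul0r mulr0.
  have := h (- (a + 1) / (2 * b)).
  have -> : a + 2 * b * (- (a + 1) / (2 * b)) + 0 * (- (a + 1) / (2 * b)) ^+ 2 = -1.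
    by field; rewrite bn0.
  by move=> H; exfalso; lra.
have cp : 0 < c by rewrite lt_neqAle eq_sym cpos hc.
have := h (- b / c).
have -> : a + 2 * b * (- b / c) + c * (- b / c) ^+ 2 = a - b ^+ 2 / c.
  by field; rewrite cpos.
rewrite subr_ge0 ler_pdivrMr //.
Qed.

Lemma cs_form q (T : 'M[R]_q) (x y : 'cV[R]_q) : T^T = T ->
  (forall z, 0 <= dot z (T *m z)) ->
  dot x (T *m y) ^+ 2 <= dot x (T *m x) * dot y (T *m y).
Proof.
move=> hT hpsd.
apply: discr => // t.
have := hpsd (x + t *: y).
have hs : dot y (T *m x) = dot x (T *m y) by rewrite dot_mul hT dotC.
by rewrite mulmxDr -scalemxAr !dotDl !dotDr !dotZl !dotZr hs; lra.
Qed.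

Lemma cs q (x y : 'cV[R]_q) : dot x y <= vnorm x * vnorm y.
Proof.
have := @cs_form q 1%:M x y (trmx1 _ _).
rewrite !mul1mx => /(_ (fun z => ltac:(rewrite mul1mx; exact: dotxx_ge0))).
rewrite -!vnorm_sqr -exprMn => h.
have : 0 <= vnorm x * vnorm y by rewrite mulr_ge0 // vnorm_ge0.
by move=> h0; apply: sq_le.
Qed.

Lemma vnormD q (x y : 'cV[R]_q) : vnorm (x + y) <= vnorm x + vnorm y.
Proof.
have h1 := cs x y.
have h2 : vnorm (x + y) ^+ 2 <= (vnorm x + vnorm y) ^+ 2.
  by rewrite vnorm_sqr dotDl !dotDr (dotC y x) sqrrD -!vnorm_sqr; lra.
by apply: sq_le h2 _; rewrite addr_ge0 // vnorm_ge0.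
Qed.


Lemma cs2 q (x y : 'cV[R]_q) : dot x y ^+ 2 <= dot x x * dot y y.
Proof.
have := @cs_form q 1%:M x y (trmx1 _ _).
rewrite !mul1mx; apply => z; rewrite mul1mx; exact: dotxx_ge0.
Qed.

Lemma mx_bound p q (M : 'M[R]_(p, q)) :
  exists K, 0 <= K /\ forall x, vnorm (M *m x) <= K * vnorm x.
Proof.
pose u (i : 'I_p) : 'cV[R]_q := (row i M)^T.
have hu : forall x i, (M *m x) i 0 = dot (u i) x.
  by move=> x i; rewrite mxE; apply: eq_bigr => j _; rewrite !mxE.
pose K2 := \sum_(i < p) dot (u i) (u i).
have K2ge0 : 0 <= K2 by apply: sumr_ge0 => i _; exact: dotxx_ge0.
exists (Num.sqrt K2); split; first exact: sqrtr_ge0.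
move=> x; apply: sq_le; last by rewrite mulr_ge0 ?sqrtr_ge0 ?vnorm_ge0.
rewrite exprMn (sqr_sqrtr K2ge0) !vnorm_sqr {1}/dot /K2 mulr_suml.
apply: ler_sum => i _; rewrite hu -expr2; exact: cs2.
Qed.

Lemma SN_bound p q (M : 'M[R]_(p, q)) x :
  vnorm (M *m x) <= specnorm M * vnorm x.
Proof.
have [x0|xn0] := eqVneq (vnorm x) 0.
  by rewrite x0 (vnorm_eq0 x0) mulmx0 vnorm0 mulr0.
have vxp : 0 < vnorm x by rewrite lt_neqAle eq_sym xn0 vnorm_ge0.
pose y := (vnorm x)^-1 *: x.
have hy : vnorm y = 1 by rewrite vnormZ ger0_norm ?invr_ge0 ?vnorm_ge0 // mulVf.
have hx : x = vnorm x *: y by rewrite /y scalerA mulfV // scale1r.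
have [K [K0 hK]] := mx_bound M.
have hs : vnorm (M *m y) <= specnorm M.
  apply: sup_upper_bound; last by exists y.
  split; first by exists (vnorm (M *m y)); exists y.
  exists K => _ [z hz <-]; by have := hK z; rewrite hz mulr1.
rewrite {1}hx -scalemxAr vnormZ ger0_norm ?vnorm_ge0 // mulrC.
by rewrite ler_wpM2r ?vnorm_ge0. 
Qed.

Lemma SN_le p q (M : 'M[R]_(p, q)) c : 0 <= c ->
  (forall x, vnorm (M *m x) <= c * vnorm x) -> specnorm M <= c.
Proof.
move=> c0 h; rewrite /specnorm.
have [[x0 hx0]|nex] := pselect (exists x : 'cV[R]_q, vnorm x = 1).
  apply: ge_sup; first by exists (vnorm (M *m x0)); exists x0.
  by move=> _ [z hz <-]; have := h z; rewrite hz mulr1.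
have -> : [set vnorm (M *m x) | x in [set x : 'cV[R]_q | vnorm x = 1]] = set0.
  apply/seteqP; split; last exact: sub0set.
  by move=> y [z hz _]; exfalso; apply: nex; exists z.
by rewrite sup0.
Qed.

Lemma SN_ge0 p q (M : 'M[R]_(p, q)) : 0 <= specnorm M.
Proof.
rewrite /specnorm.
have [[x0 hx0]|nex] := pselect (exists x : 'cV[R]_q, vnorm x = 1).
  have := SN_bound M x0; rewrite hx0 mulr1; apply: le_trans; exact: vnorm_ge0.
have -> : [set vnorm (M *m x) | x in [set x : 'cV[R]_q | vnorm x = 1]] = set0.
  apply/seteqP; split; last exact: sub0set.
  by move=> y [z hz _]; exfalso; apply: nex; exists z.
by rewrite sup0.
Qed.

Lemma SN_add p q (M N : 'M[R]_(p, q)) : specnorm (M + N) <= specnorm M + specnorm N.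
Proof.
apply: SN_le; first by rewrite addr_ge0 ?SN_ge0.
move=> x; rewrite mulmxDl mulrDl; apply: le_trans (vnormD _ _) _.
by apply: lerD; apply: SN_bound.
Qed.

Lemma SN_opp p q (M : 'M[R]_(p, q)) : specnorm (- M) <= specnorm M.
Proof.
apply: SN_le; first exact: SN_ge0.
by move=> x; rewrite mulNmx vnormN SN_bound.
Qed.

Lemma SN_sub p q (M N : 'M[R]_(p, q)) : specnorm (M - N) <= specnorm M + specnorm N.
Proof.
apply: le_trans (SN_add _ _) _; apply: lerD => //; exact: SN_opp.
Qed.

Lemma SN_mul p q r (M : 'M[R]_(p, q)) (N : 'M[R]_(q, r)) :
  specnorm (M *m N) <= specnorm M * specnorm N.
Proof.
apply: SN_le; first by rewrite mulr_ge0 ?SN_ge0.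
move=> x; rewrite -mulmxA; apply: le_trans (SN_bound _ _) _.
by rewrite -mulrA ler_wpM2l ?SN_ge0 ?SN_bound.
Qed.


Lemma dot_sym_mul q (S : 'M[R]_q) x y : S^T = S -> dot x (S *m y) = dot (S *m x) y.
Proof. by move=> hS; rewrite dot_mul hS. Qed.

Lemma inv_bound q (M : 'M[R]_q) lam : 0 < lam ->
  (forall x, lam * dot x x <= dot x (M *m x)) ->
  M \in unitmx /\ specnorm (invmx M) <= lam^-1.
Proof.
move=> lp h.
have hl : forall x, lam * vnorm x <= vnorm (M *m x).
  move=> x; have := h x; have := cs x (M *m x); rewrite -vnorm_sqr => h1 h2.
  have := vnorm_ge0 x; have := vnorm_ge0 (M *m x).
  have [x0|xn0] := eqVneq (vnorm x) 0; first by rewrite x0 mulr0.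
  move=> h3 h4; have h5 : 0 < vnorm x by rewrite lt_neqAle eq_sym xn0.
  case: (lerP (lam * vnorm x) (vnorm (M *m x))) => // h6; exfalso; nra.
have hu : M \in unitmx.
  rewrite -unitmx_tr unitmxE unitfE; apply/negP => /det0P [v vn0 hv].
  have hx : M *m v^T = 0 by rewrite -(trmxK M) -trmx_mul hv trmx0.
  have := hl v^T; rewrite hx vnorm0 => h1.
  have h2 : vnorm v^T = 0.
    apply/eqP; rewrite eq_le vnorm_ge0 andbT.
    by rewrite -(pmulr_rle0 _ lp).
  by move/eqP: vn0; apply; rewrite -(trmxK v) (vnorm_eq0 h2) trmx0.
split => //; apply: SN_le; first by rewrite invr_ge0 ltW.
move=> y; have := hl (invmx M *m y); rewrite mulmxA mulmxV // mul1mx => h1.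
have -> : vnorm (invmx M *m y) = lam^-1 * (lam * vnorm (invmx M *m y)).
  by rewrite mulrA mulVf ?mul1r // gt_eqF.
by rewrite ler_wpM2l // invr_ge0 ltW.
Qed.

Lemma unit_vec q : (0 < q)%N -> exists e : 'cV[R]_q, vnorm e = 1.
Proof.
move=> q0; exists (delta_mx (Ordinal q0) 0).
rewrite vnorm_dot /dot (bigD1 (Ordinal q0)) //= big1 ?addr0.
  by rewrite !mxE !eqxx mulr1 sqrtr1.
by move=> j hj; rewrite !mxE (negbTE hj) mul0r.
Qed.

Lemma sym_eig q (S : 'M[R]_q) : (0 < q)%N -> S^T = S ->
  exists2 x : 'cV[R]_q, x != 0 &
    (S *m x = specnorm S *: x \/ S *m x = (- specnorm S) *: x).
Proof.
move=> q0 hS.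
set mu := specnorm S.
have mu0 : 0 <= mu := SN_ge0 S.
pose T := (mu ^+ 2)%:M - S *m S.
have hTs : T^T = T by rewrite /T linearB /= trmx_mul hS tr_scalar_mx.
have hTq : forall z, dot z (T *m z) = mu ^+ 2 * dot z z - dot (S *m z) (S *m z).
  move=> z; rewrite /T mulmxBl mul_scalar_mx -mulmxA.
  by rewrite dotDr dotNr dotZr (dot_sym_mul z (S *m z) hS).
have hpsd : forall z, 0 <= dot z (T *m z).
  move=> z; rewrite hTq subr_ge0 -!vnorm_sqr -exprMn.
  have := SN_bound S z; have := vnorm_ge0 (S *m z); rewrite -/mu.
  move=> h1 h2; rewrite ler_pXn2r ?nnegrE ?mulr_ge0 ?vnorm_ge0 //.
have [e he] := unit_vec q0.
have nunit : ~~ (T \in unitmx).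
  apply/negP => hu.
  set a := specnorm T; set b := specnorm (invmx T).
  have a0 : 0 <= a := SN_ge0 _; have b0 : 0 <= b := SN_ge0 _.
  have key : forall x, dot x x <= b ^+ 2 * a * dot x (T *m x).
    move=> x.
    have h1 : vnorm x <= b * vnorm (T *m x).
      have := SN_bound (invmx T) (T *m x).
      by rewrite mulmxA mulVmx // mul1mx.
    have h2 : vnorm (T *m x) ^+ 2 <= a * dot x (T *m x).
      have c1 := cs_form x (T *m x) hTs hpsd.
      have e1 : dot x (T *m (T *m x)) = vnorm (T *m x) ^+ 2.
        by rewrite (dot_sym_mul x (T *m x) hTs) vnorm_sqr.
      have c2 : dot (T *m x) (T *m (T *m x)) <= vnorm (T *m x) * (a * vnorm (T *m x)).
        apply: le_trans (cs _ _) _; rewrite ler_wpM2l ?vnorm_ge0 //; exact: SN_bound.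
      rewrite e1 in c1.
      have := hpsd x; have := vnorm_ge0 (T *m x).
      move: c1 c2; generalize (vnorm (T *m x)) (dot x (T *m x))
        (dot (T *m x) (T *m (T *m x))) => Y D E c1 c2 Y0 D0.
      have [Yz|Ynz] := eqVneq Y 0; first by rewrite Yz expr2 mul0r mulr_ge0.
      have Yp : 0 < Y by rewrite lt_neqAle eq_sym Ynz.
      exact: aux1 c1 c2 Yp D0.
    rewrite -vnorm_sqr.
    have := vnorm_ge0 x; have := vnorm_ge0 (T *m x); have := hpsd x.
    move: h1 h2; generalize (vnorm x) (vnorm (T *m x)) (dot x (T *m x)) => X Y D h1 h2 D0 Y0 X0.
    have : X ^+ 2 <= (b * Y) ^+ 2 by rewrite ler_pXn2r ?nnegrE ?mulr_ge0.
    rewrite exprMn => h3; apply: le_trans h3 _.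
    by rewrite -mulrA ler_wpM2l // sqr_ge0.
  set k := b ^+ 2 * a.
  have k0 : 0 <= k by rewrite mulr_ge0 // sqr_ge0.
  have ee : dot e e = 1 by rewrite -vnorm_sqr he expr1n.
  have he2 := key e; rewrite -/k hTq ee mulr1 in he2.
  have se0 := dotxx_ge0 (S *m e).
  have kp : 0 < k.
    rewrite lt_neqAle k0 andbT; apply/eqP => k00; move: he2; rewrite -k00 mul0r.
    by rewrite ler10.
  set c := mu ^+ 2 - k^-1.
  have c0 : 0 <= c.
    rewrite /c subr_ge0 -(ler_pM2l kp) mulfV ?gt_eqF //.
    apply: le_trans he2 _; rewrite ler_wpM2l // lerBlDr lerDl //.
  have hc : forall x, vnorm (S *m x) <= Num.sqrt c * vnorm x.
    move=> x; apply: sq_le; last by rewrite mulr_ge0 ?sqrtr_ge0 ?vnorm_ge0.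
    rewrite exprMn (sqr_sqrtr c0) !vnorm_sqr.
    have := key x; rewrite -/k hTq => h.
    exact: aux2 kp h.
  have := SN_le (sqrtr_ge0 c) hc; rewrite -/mu => h.
  have : mu ^+ 2 <= c by rewrite -(sqr_sqrtr c0) ler_pXn2r ?nnegrE ?sqrtr_ge0.
  rewrite /c => h2; have hk : 0 < k^-1 by rewrite invr_gt0.
  exact: aux3 h2 hk.
move: nunit; rewrite -unitmx_tr unitmxE unitfE negbK => /det0P [v vn0 hv].
set x := v^T.
have hTx : T *m x = 0 by rewrite /x -(trmxK T) -trmx_mul hv trmx0.
have xn0 : x != 0.
  apply/eqP => hx; move/eqP: vn0; apply; by rewrite -(trmxK v) -/x hx trmx0.
pose y := mu *: x + S *m x.
have hTy : T *m x = mu *: y - S *m y.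
  rewrite /T /y mulmxBl mul_scalar_mx -mulmxA mulmxDr -scalemxAr scalerDr scalerA -expr2.
  by rewrite opprD addrA addrK.
have [y0|yn0] := eqVneq y 0.
  exists x => //; right.
  by move/eqP: y0; rewrite /y addrC addr_eq0 => /eqP ->; rewrite scaleNr.
exists y => //; left.
by move: hTx; rewrite hTy => /eqP; rewrite subr_eq0 => /eqP ->.
Qed.

End Basic.

Section SigmaProps.
Variables (R : realType) (dT : measure_display) (T : measurableType dT).
Variable (P : probability T R).

Lemma Sigma_props n d (A : T -> 'M[R]_(n, d)) (Sigma : 'M[R]_d) :
  (0 < n)%N -> mean0_cov P A Sigma ->
  Sigma^T = Sigma /\ forall x, 0 <= dot x (Sigma *m x).
Proof.
move=> n0 hc; pose i0 := Ordinal n0.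
have hI : forall j k, P.-integrable setT (fun w => (A w i0 j * A w i0 k)%:E).
  by move=> j k; have [] := hc i0 j k.
have hE : forall j k, (\int[P]_w (A w i0 j * A w i0 k)%:E)%E = (Sigma j k)%:E.
  by move=> j k; have [] := hc i0 j k.
split.
  apply/matrixP => j k; rewrite mxE; apply: EFin_inj.
  rewrite -hE -hE; apply: eq_integral => w _; by rewrite mulrC.
move=> x.
rewrite -lee_fin.
have -> : (dot x (Sigma *m x))%:E =
    (\sum_(j < d) \sum_(k < d) \int[P]_w ((x j 0 * x k 0)%:E * (A w i0 j * A w i0 k)%:E))%E.
  rewrite /dot -sumEFin; apply: eq_bigr => j _.
  rewrite mxE big_distrr /= -sumEFin; apply: eq_bigr => k _.
  rewrite integralZl // (hE j k) -EFinM; congr (_%:E); ring.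
have -> : (\sum_(j < d) \sum_(k < d) \int[P]_w ((x j 0 * x k 0)%:E * (A w i0 j * A w i0 k)%:E))%E
  = (\sum_(j < d) \int[P]_w (\sum_(k < d) ((x j 0 * x k 0)%:E * (A w i0 j * A w i0 k)%:E)))%E.
  apply: eq_bigr => j _; rewrite integral_sum //.
  by move=> k; apply: integrableZl => //; exact: (hI j k).
rewrite -integral_sum //; last first.
  move=> j; apply: integrable_sum => // k _; apply: integrableZl => //; exact: (hI j k).
apply: integral_ge0 => w _.
have -> : (\sum_(j < d) \sum_(k < d) (x j 0 * x k 0)%:E * (A w i0 j * A w i0 k)%:E)%E =
   ((\sum_(j < d) x j 0 * A w i0 j) ^+ 2)%:E.
  rewrite expr2 big_distrl /= -sumEFin; apply: eq_bigr => j _.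
  rewrite big_distrr /= -sumEFin; apply: eq_bigr => k _.
  by rewrite -EFinM; congr (_%:E); ring.
by rewrite lee_fin sqr_ge0.
Qed.

End SigmaProps.

Section Opt.
Variable R : realType.

Lemma quad0 (B C : R) : 0 <= C -> (forall s, 0 <= s * B + s ^+ 2 * C) -> B = 0.
Proof.
move=> C0 h.
have := @discr R 0 (B / 2) C C0.
have h' : forall t, 0 <= 0 + 2 * (B / 2) * t + C * t ^+ 2.
  move=> t; have := h t.
  have -> : 0 + 2 * (B / 2) * t + C * t ^+ 2 = t * B + t ^+ 2 * C by field.
  done.
move=> /(_ h'); rewrite mul0r => h2.
have : B / 2 = 0.
  by apply/eqP; rewrite -sqrf_eq0 eq_le h2 sqr_ge0.
move=> /eqP; rewrite mulf_eq0 invr_eq0 pnatr_eq0 orbF => /eqP //.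
Qed.

Lemma grad_lin n d (A : 'M[R]_(n, d)) b lam x :
  grad A b lam x = (n%:R^-1 *: (A^T *m A) + lam%:M) *m x - n%:R^-1 *: (A^T *m b).
Proof.
rewrite /grad mulmxDl mul_scalar_mx -scalemxAl mulmxBr mulmxA scalerBr.
by rewrite addrAC.
Qed.

Lemma opt_grad n d (A : 'M[R]_(n, d)) b lam ws : 0 <= lam ->
  (forall x, fobj A b lam ws <= fobj A b lam x) -> grad A b lam ws = 0.
Proof.
move=> l0 hmin.
set g := grad A b lam ws.
set r := A *m ws - b.
have hgg : dot g g = n%:R^-1 * dot (A *m g) r + lam * dot g ws.
  by rewrite {2}/g /grad dotDr !dotZr dot_mul trmxK.
pose C := (2 * n%:R)^-1 * dot (A *m g) (A *m g) + lam / 2 * dot g g.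
have C0 : 0 <= C.
  apply: addr_ge0; apply: mulr_ge0; rewrite ?dotxx_ge0 //.
  by apply: divr_ge0.
have hr : forall s, A *m (ws + s *: g) - b = r + s *: (A *m g).
  by move=> s; rewrite mulmxDr -scalemxAr addrAC.
have hr0 : A *m ws - b = r by [].
rewrite /C in C0 *; clearbody g r.
have key : forall s, fobj A b lam (ws + s *: g) - fobj A b lam ws =
    s * (n%:R^-1 * dot (A *m g) r + lam * dot g ws) + s ^+ 2 * C.
  move=> s; rewrite /fobj /C hr hr0 !vnorm_sqr.
  rewrite !dotDl !dotDr !dotZl !dotZr (dotC r (A *m g)) (dotC ws g).
  rewrite invfM.
  set X1 := dot r r; set X2 := dot (A *m g) r; set X3 := dot (A *m g) (A *m g).
  set X4 := dot ws ws; set X5 := dot g ws; set X6 := dot g g.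
  set ni := n%:R^-1.
  by field.
have hq : forall s, 0 <= s * dot g g + s ^+ 2 * C.
  by move=> s; rewrite hgg -key subr_ge0.
have hg0 := quad0 C0 hq.
apply: vnorm_eq0; apply/eqP; rewrite -sqrf_eq0 vnorm_sqr hg0 //.
Qed.

End Opt.

Lemma zid (V : zmodType) (a h e s : V) : (a - s) - (h - e) - (e - s) = a - h.
Proof. by rewrite !opprB -addrA [(e - h) + _]addrC !subrKA. Qed.

Lemma zid2 (V : zmodType) (a b c : V) : (a + c) - (b + c) = a - b.
Proof. by rewrite [b + c]addrC addrKA. Qed.

Section Num.
Variable R : realType.

Lemma beta_ge (a r : R) : 0 <= a -> a < 1 -> 1 <= r ->
  a <= Num.sqrt 2 * a / Num.sqrt (1 - a ^+ 2) * Num.sqrt r.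
Proof.
move=> a0 a1 r1.
have q0 : 0 < Num.sqrt (1 - a ^+ 2).
  rewrite sqrtr_gt0 subr_gt0; rewrite expr2.
  have : a * a <= a * 1 by rewrite ler_wpM2l // ltW.
  by rewrite mulr1 => h; apply: le_lt_trans h a1.
have q1 : Num.sqrt (1 - a ^+ 2) <= 1.
  by rewrite -[X in _ <= X]sqrtr1 ler_sqrt // lerBlDr lerDl sqr_ge0.
have s21 : Num.sqrt 1 <= Num.sqrt 2 :> R by rewrite ler_sqrt // ler1n.
have sr1 : Num.sqrt 1 <= Num.sqrt r by rewrite ler_sqrt // (le_trans ler01 r1).
rewrite sqrtr1 in s21 sr1.
have u1 : 1 <= Num.sqrt 2 / Num.sqrt (1 - a ^+ 2).
  by rewrite ler_pdivlMr // mul1r (le_trans q1 s21).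
have -> : Num.sqrt 2 * a / Num.sqrt (1 - a ^+ 2) * Num.sqrt r =
   a * ((Num.sqrt 2 / Num.sqrt (1 - a ^+ 2)) * Num.sqrt r).
  by ring.
move: u1 sr1; generalize (Num.sqrt 2 / Num.sqrt (1 - a ^+ 2)) (Num.sqrt r) => u v u1 v1.
have uv : 1 <= u * v by rewrite -[1]mulr1; apply: ler_pM. 
by rewrite -{1}(mulr1 a) ler_wpM2l.
Qed.

Lemma num1 (mu lam smax e : R) : e = mu - lam -> e <= smax -> mu <= smax + lam.
Proof. move=> -> h; lra. Qed.

Lemma num2 (mu lam smin e a0 : R) : e = - mu - lam -> smin <= e -> 0 <= a0 ->
  a0 < smin + lam -> 0 <= mu -> False.
Proof. move=> -> h1 h2 h3 h4; lra. Qed.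

End Num.

Lemma zid3 (V : zmodType) (a l c : V) : (a + l) - (a - c) = c + l.
Proof. by rewrite opprB addrC subrKA. Qed.


Unset Implicit Arguments.
Set Strict Implicit.

Theorem theorem3p1 (R : realType) (dT : measure_display) (T : measurableType dT)
  (P : probability T R) (m p d : nat) (A : T -> 'M[R]_(m * p, d))
  (Sigma : 'M[R]_d) (b : 'cV[R]_(m * p)) (lam sigmin sigmax : R) :
  (0 < m)%N ->
  iid_rows P A ->
  mean0_cov P A Sigma ->
  0 < lam ->
  m%:R * dlam Sigma lam < (m * p)%:R ->
  eigenvalue Sigma sigmin -> eigenvalue Sigma sigmax ->
  (forall s, eigenvalue Sigma s -> sigmin <= s <= sigmax) ->
  (forall i j, P.-integrable setT
     (fun w => ((invmx (Htilde (A w) (dlam Sigma lam) lam)) i j)%:E)) ->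
  forall (w0 : T) (omega_star : 'cV[R]_d) (omega : nat -> 'cV[R]_d),
  let n := (m * p)%N in
  let A0 := A w0 in
  let Hti := invmx (Htilde A0 (dlam Sigma lam) lam) in
  let EHti := Emx P (fun w => invmx (Htilde (A w) (dlam Sigma lam) lam)) in
  let alpha0 := specnorm (Sigma - n%:R^-1 *: (A0^T *m A0)) in
  let alpha1 := specnorm (Hti - EHti) in
  let Omega0 := EHti - invmx (Sigma + lam%:M) in
  let alpha := (sigmax + lam + alpha0) *
                 (lam ^- 2 * alpha0 + alpha1 + specnorm Omega0) in
  let beta := Num.sqrt 2 * alpha / Num.sqrt (1 - alpha ^+ 2) *
                Num.sqrt ((sigmax + lam + alpha0) / (sigmin + lam - alpha0)) in
  (forall x, fobj A0 b lam omega_star <= fobj A0 b lam x) ->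
  (forall t, omega t.+1 = omega t - Hti *m grad A0 b lam (omega t)) ->
  alpha < 1 ->
  alpha0 < sigmin + lam ->
  forall t, vnorm (omega t.+1 - omega_star) <= beta * vnorm (omega t - omega_star).
Proof.
move=> m0 hiid hcov lp hdl hsmin hsmax hbnd hint w0 ws om n A0 Hti EHti alpha0
  alpha1 Omega0 alpha beta hmin hom ha1 ha0 t.
have dpos : (0 < d)%N.
  move/eigenvalueP: hsmin => [v _ vn0]; case: (posnP d) => // d0.
  exfalso; move/eqP: vn0; apply; apply/matrixP => i j.
  by case: j => j hj; exfalso; move: hj; rewrite d0.
pose H := n%:R^-1 *: (A0^T *m A0) + lam%:M.
have hg0 := opt_grad (ltW lp) hmin.
have hgrad : forall x, grad A0 b lam x = H *m (x - ws).
  move=> x; rewrite grad_lin mulmxBr; congr (_ - _).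
  by apply/eqP; rewrite eq_sym -subr_eq0 /H -grad_lin hg0.
have hdelta : om t.+1 - ws = (1%:M - Hti *m H) *m (om t - ws).
  by rewrite hom hgrad mulmxBl mul1mx mulmxA addrAC.
have a00 : 0 <= alpha0 := SN_ge0 _.
have a10 : 0 <= alpha1 := SN_ge0 _.
have o00 : 0 <= specnorm Omega0 := SN_ge0 _.
have smm : sigmin <= sigmax by have /andP[] := hbnd _ hsmax.
have K0 : 0 < sigmax + lam + alpha0.
  lra.
have alpha_ge0 : 0 <= alpha.
  rewrite /alpha; apply: mulr_ge0; first lra.
  rewrite !addr_ge0 // mulr_ge0 // invr_ge0 exprn_ge0 // ltW //.
have alpha_beta : alpha <= beta.
  apply: beta_ge => //.
  rewrite ler_pdivlMr ?mul1r; last by rewrite subr_gt0.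
  lra.
suff hb : specnorm (1%:M - Hti *m H) <= alpha.
  rewrite hdelta; apply: le_trans (SN_bound _ _) _.
  by rewrite ler_wpM2r ?vnorm_ge0 // (le_trans hb alpha_beta).
have [n0|npos] := posnP n.
  have hA0 : A0 = 0.
    by apply/matrixP => i j; case: i => i hi; exfalso; move: hi; rewrite -/n n0.
  have p0 : p = 0%N.
    move: n0; rewrite /n => /eqP; rewrite muln_eq0 => /orP [/eqP hm|/eqP //].
    by rewrite hm in m0.
  have hblk : forall i, block A0 i = 0.
    by move=> i; apply/matrixP => r c; case: r => r hr; exfalso; move: hr; rewrite p0.
  have hHti : Hti = (lam^-1)%:M.
    rewrite /Hti /Htilde /= invmxK.
    under eq_bigr => i _ do rewrite hblk trmx0 mul0mx scaler0 add0r invmx_scalar.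
    rewrite sumr_const card_ord -[(lam^-1)%:M *+ m]scaler_nat scalerA mulVf ?scale1r //.
    by rewrite pnatr_eq0 -lt0n.
  have hH : H = lam%:M by rewrite /H hA0 trmx0 mul0mx scaler0 add0r.
  rewrite hHti hH -scalar_mxM mulVf ?gt_eqF // subrr.
  apply: SN_le => // x; rewrite mul0mx vnorm0; exact: mulr_ge0 alpha_ge0 (vnorm_ge0 x).
have [hsym hpsd] := Sigma_props npos hcov.
pose S := Sigma + lam%:M.
pose E := Sigma - n%:R^-1 *: (A0^T *m A0).
have hE : alpha0 = specnorm E by [].
have hS : S^T = S by rewrite /S linearD /= hsym tr_scalar_mx.
have hSpd : forall x, lam * dot x x <= dot x (S *m x).
  move=> x; rewrite /S mulmxDl mul_scalar_mx dotDr dotZr addrC lerDl; exact: hpsd.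
have hHpd : forall x, lam * dot x x <= dot x (H *m x).
  move=> x; rewrite /H mulmxDl mul_scalar_mx dotDr dotZr addrC lerDl.
  rewrite -scalemxAl dotZr -mulmxA dot_mul trmxK mulr_ge0 ?dotxx_ge0 //.
have [Su Sinv] := inv_bound lp hSpd.
have [Hu Hinv] := inv_bound lp hHpd.
have eig_of : forall (e : R) (x : 'cV[R]_d), x != 0 -> S *m x = e *: x -> eigenvalue Sigma (e - lam).
  move=> e x xn0 hx; apply/eigenvalueP; exists x^T; last first.
    by apply/eqP => h; move/eqP: xn0; apply; rewrite -(trmxK x) h trmx0.
  have hx2 : Sigma *m x = (e - lam) *: x.
    move: hx; rewrite /S mulmxDl mul_scalar_mx => hx.
    by rewrite scalerBl -hx addrK.
  by rewrite -{1}hsym -trmx_mul hx2 linearZ.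
have hSn : specnorm S <= sigmax + lam.
  have [x xn0 [hx|hx]] := sym_eig dpos hS.
    have := hbnd _ (eig_of _ _ xn0 hx) => /andP [_ h].
    exact: num1 (erefl _) h.
  have := hbnd _ (eig_of _ _ xn0 hx) => /andP [h _].
  exfalso; exact: num2 (erefl _) h a00 ha0 (SN_ge0 S).
have hHS : H = S - E by rewrite /H /S /E zid3.
have hHn : specnorm H <= sigmax + lam + alpha0.
  by rewrite hHS hE; apply: le_trans (SN_sub _ _) _; rewrite lerD.
have e1 : invmx H *m E *m invmx S = invmx H - invmx S.
  have -> : E = S - H by rewrite hHS opprB addrC subrK.
  by rewrite mulmxBr mulmxBl mulVmx // mul1mx -mulmxA mulmxV // mulmx1.
have hid : 1%:M - Hti *m H = (invmx H *m E *m invmx S - (Hti - EHti) - Omega0) *m H.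
  by rewrite e1 /Omega0 zid mulmxBl mulVmx.
rewrite hid; apply: le_trans (SN_mul _ _) _.
rewrite /alpha [X in _ <= X]mulrC; apply: ler_pM => //.
- exact: SN_ge0.
- exact: SN_ge0.
- apply: le_trans (SN_sub _ _) _; apply: lerD => //.
  apply: le_trans (SN_sub _ _) _; apply: lerD => //.
  apply: le_trans (SN_mul _ _) _.
  have h1 := SN_mul (invmx H) E.
  have : specnorm (invmx H) * specnorm E * specnorm (invmx S) <= lam ^- 2 * alpha0.
    rewrite -hE -exprVn expr2 mulrAC ler_wpM2r //.
    by apply: ler_pM => //; exact: SN_ge0.
  apply: le_trans; apply: ler_wpM2r => //; exact: SN_ge0.
Qed.
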